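(* There exist a compact set $\mathcal A\subseteq\mathbb R^2$ with $\lambda^2(\mathcal A)=1/4$ and a $C^\infty$-function $\kappa\colon\mathbb R^2\to\mathbb R$ that is one-to-one on $\mathcal A$.
   Context: $\lambda^2$ denotes Lebesgue measure on $\mathbb R^2$. *)

(* Defs.v *)
From Stdlib Require Import Reals Lra List.
Open Scope R_scope.

Definition pt := (R * R)%type.

Definition dist2 (p q : pt) : R :=
  sqrt ((fst p - fst q)^2 + (snd p - snd q)^2).

Definition open2 (U : pt -> Prop) : Prop :=
  forall p, U p -> exists eps, 0 < eps /\ forall q, dist2 p q < eps -> U q.

Definition compact2 (A : pt -> Prop) : Prop :=
  forall (I : Type) (U : I -> pt -> Prop),
    (forall i, open2 (U i)) ->
    (forall p, A p -> exists i, U i p) ->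
    exists l : list I, forall p, A p -> exists i, In i l /\ U i p.

(* Lebesgue (outer) measure on R^2: infimum of the total area of countable
   covers by closed rectangles [a n, b n] x [c n, d n].  For compact (hence
   Lebesgue measurable) sets this is the Lebesgue measure lambda^2. *)
Definition rect_cover_sums (A : pt -> Prop) (s : R) : Prop :=
  exists a b c d : nat -> R,
    (forall n, a n <= b n /\ c n <= d n) /\
    (forall p, A p -> exists n,
        a n <= fst p <= b n /\ c n <= snd p <= d n) /\
    infinite_sum (fun n => (b n - a n) * (d n - c n)) s.

Definition is_glb (E : R -> Prop) (m : R) : Prop :=
  (forall x, E x -> m <= x) /\ (forall m', (forall x, E x -> m' <= x) -> m' <= m).

Definition lambda2_is (A : pt -> Prop) (m : R) : Prop :=
  is_glb (rect_cover_sums A) m.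

Definition continuous2 (f : pt -> R) : Prop :=
  forall p eps, 0 < eps -> exists delta, 0 < delta /\
    forall q, dist2 p q < delta -> Rabs (f q - f p) < eps.

Fixpoint Ck2 (k : nat) (f : pt -> R) : Prop :=
  match k with
  | O => continuous2 f
  | S k' => continuous2 f /\
      exists fx fy : pt -> R,
        (forall x y, derivable_pt_lim (fun t => f (t, y)) x (fx (x, y))) /\
        (forall x y, derivable_pt_lim (fun t => f (x, t)) y (fy (x, y))) /\
        Ck2 k' fx /\ Ck2 k' fy
  end.

Definition smooth2 (f : pt -> R) : Prop := forall k, Ck2 k f.

Definition injective_on (f : pt -> R) (A : pt -> Prop) : Prop :=
  forall p q, A p -> A q -> f p = f q -> p = q.

(* Main.v *)
Require Import Defs.
From Stdlib Require Import Reals.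
From Stdlib Require Import Lra Lia Arith ZArith List FunctionalExtensionality IndefiniteDescription Classical.
From Coquelicot Require Import Coquelicot.
Open Scope R_scope.

Fixpoint Ck1 (k:nat) (f:R->R) : Prop :=
  match k with O => True | S k' => exists f', (forall x, derivable_pt_lim f x (f' x)) /\ Ck1 k' f' end.

Lemma Ck1_lower : forall k f, Ck1 (S k) f -> Ck1 k f.
Proof.
  induction k; intros f H; simpl; auto.
  destruct H as [f' [H1 H2]]. exists f'; split; auto.
Qed.

Lemma Ck1_const : forall k c, Ck1 k (fun _ => c).
Proof.
  induction k; intros c; simpl; auto.
  exists (fun _ => 0). split; auto. intros; apply derivable_pt_lim_const.
Qed.

Lemma Ck1_plus : forall k f g, Ck1 k f -> Ck1 k g -> Ck1 k (fun x => f x + g x).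
Proof.
  induction k; intros f g Hf Hg; simpl; auto.
  destruct Hf as [f' [Hf1 Hf2]]; destruct Hg as [g' [Hg1 Hg2]].
  exists (fun x => f' x + g' x); split; auto.
  intros x. apply (derivable_pt_lim_plus f g x). apply Hf1. apply Hg1.
Qed.

Lemma Ck1_mult : forall k f g, Ck1 k f -> Ck1 k g -> Ck1 k (fun x => f x * g x).
Proof.
  induction k; intros f g Hf Hg; simpl; auto.
  pose proof (Ck1_lower _ _ Hf) as Hf0. pose proof (Ck1_lower _ _ Hg) as Hg0.
  destruct Hf as [f' [Hf1 Hf2]]; destruct Hg as [g' [Hg1 Hg2]].
  exists (fun x => f' x * g x + f x * g' x); split.
  - intros x. apply (derivable_pt_lim_mult f g x). apply Hf1. apply Hg1.
  - apply Ck1_plus; apply IHk; auto.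
Qed.

Lemma Ck1_scal : forall k a f, Ck1 k f -> Ck1 k (fun x => a * f x).
Proof. intros; apply Ck1_mult; auto; apply Ck1_const. Qed.

Lemma Ck1_ext : forall k f g, (forall x, f x = g x) -> Ck1 k f -> Ck1 k g.
Proof.
  intros k f g H. replace g with f; auto. apply functional_extensionality; auto.
Qed.

Lemma Ck1_affine : forall k a c f, Ck1 k f -> Ck1 k (fun x => f (a * x + c)).
Proof.
  induction k; intros a c f Hf; simpl; auto.
  destruct Hf as [f' [Hf1 Hf2]].
  exists (fun x => a * f' (a * x + c)); split.
  - intros x.
    assert (H := derivable_pt_lim_comp (fun x => a * x + c) f x a (f' (a * x + c))).
    replace (a * f' (a * x + c)) with (f' (a * x + c) * a) by ring.
    apply H.
    + apply is_derive_Reals. auto_derive; auto; ring.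
    + apply Hf1.
  - apply Ck1_scal. apply IHk; auto.
Qed.

Lemma Ck1_inv : forall k h, (forall x, h x <> 0) -> Ck1 k h -> Ck1 k (fun x => / h x).
Proof.
  induction k; intros h Hn Hh; simpl; auto.
  pose proof (Ck1_lower _ _ Hh) as Hh0.
  destruct Hh as [h' [H1 H2]].
  exists (fun x => - h' x * (/ h x * / h x)); split.
  - intros x.
    apply is_derive_Reals.
    assert (H := is_derive_inv h x (h' x) (proj2 (is_derive_Reals _ _ _) (H1 x)) (Hn x)).
    replace (- h' x * (/ h x * / h x)) with (- h' x / (h x)^2).
    exact H. field; auto.
  - apply Ck1_mult. apply Ck1_ext with (fun x => (-1) * h' x). intros; ring.
    apply Ck1_scal; auto.
    apply Ck1_mult; apply IHk; auto.
Qed.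

Definition hf (m:nat) (t:R) : R := if Rlt_dec 0 t then exp (- / t) * (/ t) ^ m else 0.

Lemma sum_last_le : forall (f : nat -> R) n, (forall i, 0 <= f i) -> f n <= sum_f_R0 f n.
Proof.
  intros f n H. destruct n; simpl. lra.
  pose proof (cond_pos_sum f n H). lra.
Qed.

Lemma exp_big : forall u n, 0 <= u -> u ^ n / INR (Factorial.fact n) <= exp u.
Proof.
  intros u n Hu. eapply Rle_trans; [|apply (exp_ge_taylor u n Hu)].
  apply (sum_last_le (fun k => u ^ k / INR (Factorial.fact k))).
  intros i. apply Rdiv_le_0_compat. apply pow_le; auto. apply lt_0_INR. apply Factorial.lt_O_fact.
Qed.

Lemma hf_small : forall m t, 0 < t -> exp (- / t) * (/ t) ^ (S m) <= INR (Factorial.fact (S (S m))) * t.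
Proof.
  intros m t Ht. set (u := / t).
  assert (Hu : 0 < u) by (apply Rinv_0_lt_compat; auto).
  assert (Ht' : t = / u) by (unfold u; rewrite Rinv_inv; auto).
  rewrite Ht'. rewrite exp_Ropp.
  pose proof (exp_big u (S (S m)) (Rlt_le _ _ Hu)) as E.
  assert (F : 0 < INR (Factorial.fact (S (S m)))) by (apply lt_0_INR; apply Factorial.lt_O_fact).
  assert (Ep : 0 < exp u) by apply exp_pos.
  apply Rmult_le_reg_l with (exp u * u); [apply Rmult_lt_0_compat; auto|].
  replace (exp u * u * (/ exp u * u ^ S m)) with (u ^ S (S m)) by (simpl; field; lra).
  replace (exp u * u * (INR (Factorial.fact (S (S m))) * / u)) with (exp u * INR (Factorial.fact (S (S m)))) by (field; lra).
  apply Rmult_le_reg_r with (/ INR (Factorial.fact (S (S m)))). apply Rinv_0_lt_compat; auto.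
  replace (exp u * INR (Factorial.fact (S (S m))) * / INR (Factorial.fact (S (S m)))) with (exp u) by (field; lra).
  exact E.
Qed.

Lemma hf_deriv : forall m x, derivable_pt_lim (hf m) x (hf (m+2) x - INR m * hf (m+1) x).
Proof.
  intros m x. destruct (Rlt_le_dec 0 x) as [Hx|Hx].
  - apply is_derive_Reals.
    apply is_derive_ext_loc with (fun t => exp (- / t) * (/ t) ^ m).
    + exists (mkposreal x Hx). intros y Hy. unfold hf. destruct (Rlt_dec 0 y); auto.
      exfalso. unfold ball in Hy; simpl in Hy; unfold AbsRing_ball, abs, minus, plus, opp in Hy; simpl in Hy.
      apply Rabs_lt_between in Hy. lra.
    + unfold hf. destruct (Rlt_dec 0 x); [|lra].
      auto_derive. lra.
      destruct m. simpl. field. lra.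
      rewrite !S_INR. simpl Init.Nat.pred. replace (S m + 2)%nat with (S (S (S m))) by lia.
      replace (S m + 1)%nat with (S (S m)) by lia. simpl. field. lra.
  - destruct Hx as [Hx|Hx].
    + apply is_derive_Reals.
      apply is_derive_ext_loc with (fun t => 0).
      * exists (mkposreal (- x) ltac:(lra)). intros y Hy. unfold hf. destruct (Rlt_dec 0 y); auto.
        exfalso. unfold ball in Hy; simpl in Hy; unfold AbsRing_ball, abs, minus, plus, opp in Hy; simpl in Hy.
        apply Rabs_lt_between in Hy. lra.
      * unfold hf. destruct (Rlt_dec 0 x); [lra|]. replace (0 - INR m * 0) with 0 by ring.
        auto_derive; auto.
    + subst x. unfold hf at 2 3. destruct (Rlt_dec 0 0); [lra|].
      replace (0 - INR m * 0) with 0 by ring.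
      intros eps Heps.
      assert (F : 0 < INR (Factorial.fact (S (S m)))) by (apply lt_0_INR; apply Factorial.lt_O_fact).
      exists (mkposreal (eps / INR (Factorial.fact (S (S m)))) ltac:(apply Rdiv_lt_0_compat; auto)).
      intros h Hh Hhd. simpl in Hhd. unfold hf. rewrite Rplus_0_l.
      destruct (Rlt_dec 0 0); [lra|]. destruct (Rlt_dec 0 h) as [Hp|Hp].
      * replace ((exp (- / h) * (/ h) ^ m - 0) / h - 0) with (exp (- / h) * (/ h) ^ S m) by (simpl; field; lra).
        pose proof (hf_small m h Hp).
        assert (0 <= exp (- / h) * (/ h) ^ S m).
        { apply Rmult_le_pos. left; apply exp_pos. apply pow_le. left; apply Rinv_0_lt_compat; auto. }
        rewrite Rabs_right by lra.
        rewrite Rabs_right in Hhd by lra.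
        apply Rle_lt_trans with (INR (Factorial.fact (S (S m))) * h); auto.
        apply Rmult_lt_reg_r with (/ INR (Factorial.fact (S (S m)))). apply Rinv_0_lt_compat; auto.
        replace (INR (Factorial.fact (S (S m))) * h * / INR (Factorial.fact (S (S m)))) with h by (field; lra).
        exact Hhd.
      * replace ((0 - 0) / h - 0) with 0 by (field; auto). rewrite Rabs_R0; auto.
Qed.

Lemma hf_Ck : forall k m, Ck1 k (hf m).
Proof.
  induction k; intros m; simpl; auto.
  exists (fun x => hf (m+2) x - INR m * hf (m+1) x). split.
  - apply hf_deriv.
  - apply Ck1_ext with (fun x => hf (m+2) x + (- INR m) * hf (m+1) x). intros; ring.
    apply Ck1_plus; auto. apply Ck1_scal; auto.
Qed.

Lemma Derive_n_S' : forall n f x, Derive_n f (S n) x = Derive_n (Derive f) n x.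
Proof.
  induction n; intros f x. reflexivity.
  change (Derive (Derive_n f (S n)) x = Derive (Derive_n (Derive f) n) x).
  f_equal. apply functional_extensionality. intros; apply IHn.
Qed.

Lemma Ck1_tower : forall k f, Ck1 (S k) f -> forall x, derivable_pt_lim (Derive_n f k) x (Derive_n f (S k) x).
Proof.
  induction k; intros f Hf x.
  - destruct Hf as [f' [H1 _]]. simpl.
    replace (Derive (fun x => f x) x) with (f' x). apply H1.
    symmetry. apply is_derive_unique. apply is_derive_Reals. apply H1.
  - destruct Hf as [f' [H1 H2]].
    assert (E : Derive f = f').
    { apply functional_extensionality. intros y. apply is_derive_unique. apply is_derive_Reals. apply H1. }
    assert (E1 : Derive_n f (S k) = Derive_n f' k).
    { apply functional_extensionality. intros y. rewrite Derive_n_S'. rewrite E. auto. }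
    assert (E2 : Derive_n f (S (S k)) x = Derive_n f' (S k) x).
    { rewrite Derive_n_S'. rewrite E. auto. }
    rewrite E1, E2. apply IHk. auto.
Qed.

Definition gfl (t:R) : R := hf 0 t.
Definition Ssm (t:R) : R := gfl t * / (gfl t + gfl (-1 * t + 1)).

Lemma gfl_nonneg : forall t, 0 <= gfl t.
Proof. intros t; unfold gfl, hf. destruct (Rlt_dec 0 t). simpl. rewrite Rmult_1_r. left; apply exp_pos. lra. Qed.
Lemma gfl_pos : forall t, 0 < t -> 0 < gfl t.
Proof. intros t H; unfold gfl, hf. destruct (Rlt_dec 0 t). simpl. rewrite Rmult_1_r. apply exp_pos. lra. Qed.
Lemma gfl_zero : forall t, t <= 0 -> gfl t = 0.
Proof. intros t H; unfold gfl, hf. destruct (Rlt_dec 0 t). lra. auto. Qed.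

Lemma den_pos : forall t, 0 < gfl t + gfl (-1 * t + 1).
Proof.
  intros t. destruct (Rlt_le_dec 0 t).
  - pose proof (gfl_pos t r). pose proof (gfl_nonneg (-1*t+1)). lra.
  - pose proof (gfl_pos (-1*t+1) ltac:(lra)). pose proof (gfl_nonneg t). lra.
Qed.

Lemma Ssm_Ck : forall k, Ck1 k Ssm.
Proof.
  intros k. unfold Ssm. apply Ck1_mult. apply hf_Ck.
  apply Ck1_inv. intros x; pose proof (den_pos x); lra.
  apply Ck1_plus. apply hf_Ck. apply (Ck1_affine k (-1) 1 gfl). apply hf_Ck.
Qed.

Lemma Ssm_0 : forall t, t <= 0 -> Ssm t = 0.
Proof. intros t H. unfold Ssm. rewrite gfl_zero; auto. ring. Qed.
Lemma Ssm_1 : forall t, 1 <= t -> Ssm t = 1.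
Proof. intros t H. unfold Ssm. rewrite (gfl_zero (-1*t+1)) by lra. pose proof (gfl_pos t ltac:(lra)). field. lra. Qed.
Lemma Ssm_range : forall t, 0 <= Ssm t <= 1.
Proof.
  intros t. unfold Ssm. pose proof (den_pos t). pose proof (gfl_nonneg t). pose proof (gfl_nonneg (-1*t+1)).
  split. apply Rmult_le_pos; auto. left; apply Rinv_0_lt_compat; auto.
  apply Rmult_le_reg_r with (gfl t + gfl (-1 * t + 1)); auto.
  rewrite Rmult_assoc, Rinv_l by lra. lra.
Qed.

Definition DS (j:nat) (t:R) : R := Derive_n Ssm j t.

Lemma DS_tower : forall j x, derivable_pt_lim (DS j) x (DS (S j) x).
Proof. intros j x. apply Ck1_tower. apply Ssm_Ck. Qed.

Lemma DS_0 : forall t, DS 0 t = Ssm t.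
Proof. reflexivity. Qed.

Lemma DS_cont : forall j x, continuity_pt (DS j) x.
Proof. intros j x. apply derivable_continuous_pt. exists (DS (S j) x). apply DS_tower. Qed.

Lemma DS_out : forall j t, (t < 0 \/ 1 < t) -> DS (S j) t = 0.
Proof.
  intros j t [H|H]; unfold DS.
  - rewrite (Derive_n_ext_loc _ (fun _ => 0)). apply Derive_n_const.
    exists (mkposreal (- t) ltac:(lra)). intros y Hy.
    unfold ball in Hy; simpl in Hy; unfold AbsRing_ball, abs, minus, plus, opp in Hy; simpl in Hy.
    apply Rabs_lt_between in Hy. apply Ssm_0. lra.
  - rewrite (Derive_n_ext_loc _ (fun _ => 1)). apply Derive_n_const.
    exists (mkposreal (t - 1) ltac:(lra)). intros y Hy.
    unfold ball in Hy; simpl in Hy; unfold AbsRing_ball, abs, minus, plus, opp in Hy; simpl in Hy.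
    apply Rabs_lt_between in Hy. apply Ssm_1. lra.
Qed.

Lemma DS_bound : forall j, exists M, 0 <= M /\ forall t, Rabs (DS j t) <= M.
Proof.
  intros [|j].
  - exists 1. split. lra. intros t. rewrite DS_0. pose proof (Ssm_range t). rewrite Rabs_right; lra.
  - destruct (continuity_ab_maj (DS (S j)) 0 1 ltac:(lra)) as [a [Ha _]].
    { intros; apply DS_cont. }
    destruct (continuity_ab_min (DS (S j)) 0 1 ltac:(lra)) as [b [Hb _]].
    { intros; apply DS_cont. }
    exists (Rabs (DS (S j) a) + Rabs (DS (S j) b)). split.
    pose proof (Rabs_pos (DS (S j) a)); pose proof (Rabs_pos (DS (S j) b)); lra.
    intros t. destruct (Rlt_le_dec t 0) as [H|H].
    + rewrite DS_out by auto. rewrite Rabs_R0.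
      pose proof (Rabs_pos (DS (S j) a)); pose proof (Rabs_pos (DS (S j) b)); lra.
    + destruct (Rlt_le_dec 1 t) as [H'|H'].
      * rewrite DS_out by auto. rewrite Rabs_R0.
        pose proof (Rabs_pos (DS (S j) a)); pose proof (Rabs_pos (DS (S j) b)); lra.
      * specialize (Ha t (conj H H')). specialize (Hb t (conj H H')).
        pose proof (Rle_abs (DS (S j) a)). pose proof (Rle_abs (- DS (S j) b)).
        rewrite Rabs_Ropp in H1.
        pose proof (Rabs_pos (DS (S j) a)); pose proof (Rabs_pos (DS (S j) b)).
        apply Rabs_le. lra.
Qed.

Lemma tail_bound : forall a b A B, Un_cv (sum_f_R0 a) A -> Un_cv (sum_f_R0 b) B ->
  (forall k, Rabs (a k) <= b k) -> forall n, Rabs (A - sum_f_R0 a n) <= B - sum_f_R0 b n.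
Proof.
  intros a b A B Ha Hb Hab n.
  assert (L : forall m, Rabs (sum_f_R0 a (m + n) - sum_f_R0 a n) <= sum_f_R0 b (m + n) - sum_f_R0 b n).
  { induction m. simpl. rewrite Rminus_diag, Rabs_R0. lra.
    simpl (S m + n)%nat. simpl sum_f_R0 at 1 3.
    specialize (Hab (S (m + n))).
    replace (sum_f_R0 a (m + n) + a (S (m + n)) - sum_f_R0 a n) with ((sum_f_R0 a (m + n) - sum_f_R0 a n) + a (S (m + n))) by ring.
    eapply Rle_trans. apply Rabs_triang. lra. }
  apply is_lim_seq_Reals in Ha. apply is_lim_seq_Reals in Hb.
  assert (H1 : is_lim_seq (fun m => Rabs (sum_f_R0 a (m + n) - sum_f_R0 a n)) (Rabs (A - sum_f_R0 a n))).
  { apply (is_lim_seq_abs _ (A - sum_f_R0 a n)). apply is_lim_seq_minus'.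
    apply (is_lim_seq_incr_n (sum_f_R0 a) n A). auto. apply is_lim_seq_const. }
  assert (H2 : is_lim_seq (fun m => sum_f_R0 b (m + n) - sum_f_R0 b n) (B - sum_f_R0 b n)).
  { apply is_lim_seq_minus'.
    apply (is_lim_seq_incr_n (sum_f_R0 b) n B). auto. apply is_lim_seq_const. }
  pose proof (is_lim_seq_le _ _ _ _ L H1 H2). simpl in H. auto.
Qed.

Lemma sum_deriv : forall (f f' : nat -> R -> R) N x,
  (forall n, derivable_pt_lim (f n) x (f' n x)) ->
  derivable_pt_lim (fun y => sum_f_R0 (fun n => f n y) N) x (sum_f_R0 (fun n => f' n x) N).
Proof.
  intros f f' N x H. induction N; simpl. apply H.
  apply (derivable_pt_lim_plus (fun y => sum_f_R0 (fun n => f n y) N) (f (S N))); auto.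
Qed.

Section Ser.
Variable T : nat -> nat -> R -> R.
Variable B : nat -> nat -> R.
Hypothesis Ttower : forall n j x, derivable_pt_lim (T n j) x (T n (S j) x).
Hypothesis Tbound : forall n j x, Rabs (T n j x) <= B n j.
Hypothesis Bsum : forall j, ex_series (fun n => B n j).

Definition SumT (j:nat) (x:R) : R := Series (fun n => T n j x).

Lemma SumT_cv : forall j x, Un_cv (sum_f_R0 (fun n => T n j x)) (SumT j x).
Proof.
  intros j x. apply is_series_Reals. apply Series_correct.
  apply (@ex_series_le R_AbsRing R_CompleteNormedModule _ (fun n => B n j)); auto.
Qed.

Lemma Bsum_cv : forall j, Un_cv (sum_f_R0 (fun n => B n j)) (Series (fun n => B n j)).
Proof. intros j. apply is_series_Reals. apply Series_correct. auto. Qed.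

Lemma SumT_tower : forall j x, derivable_pt_lim (SumT j) x (SumT (S j) x).
Proof.
  intros j x.
  assert (Hd : 0 < Rabs x + 1) by (pose proof (Rabs_pos x); lra).
  apply (CVU_derivable (fun N y => sum_f_R0 (fun n => T n j y) N) (fun N y => sum_f_R0 (fun n => T n (S j) y) N)
     (SumT j) (SumT (S j)) 0 (mkposreal _ Hd)).
  - intros eps Heps.
    destruct (Bsum_cv (S j) eps Heps) as [N HN].
    exists N. intros n y Hn _.
    eapply Rle_lt_trans. apply (tail_bound (fun k => T k (S j) y) (fun k => B k (S j))); auto.
    apply SumT_cv. apply Bsum_cv.
    specialize (HN n Hn). unfold R_dist in HN. rewrite Rabs_minus_sym in HN.
    eapply Rle_lt_trans; [apply Rle_abs|]. auto.
  - intros y _. apply SumT_cv.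
  - intros n y _. cbv beta. apply (sum_deriv (fun k y => T k j y) (fun k y => T k (S j) y) n y). intros; apply Ttower.
  - unfold Boule; simpl. rewrite Rminus_0_r. lra.
Qed.

Lemma SumT_bound : forall j x, Rabs (SumT j x) <= Series (fun n => B n j).
Proof.
  intros j x. pose proof (tail_bound (fun k => T k j x) (fun k => B k j) _ _ (SumT_cv j x) (Bsum_cv j) (fun k => Tbound k j x) O).
  simpl in H. pose proof (Tbound O j x).
  pose proof (Rabs_triang (SumT j x - T 0%nat j x) (T 0%nat j x)).
  replace (SumT j x - T 0%nat j x + T 0%nat j x) with (SumT j x) in H1 by ring. lra.
Qed.
End Ser.

Definition sl (n:nat) : R := (/2)^(S n) * (1 + (/2)^n).
Definition gp (n:nat) : R := (/4)^(S n).
Definition wl (n:nat) : R := (/4)^n.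

Fixpoint L (n:nat) (j:nat) : R :=
  match n with
  | O => 2 * INR j
  | S n' => L n' (Nat.div2 j) + (if Nat.odd j then sl (S n') + gp n' else 0)
  end.

Lemma sl_split : forall n, sl n = 2 * sl (S n) + gp n.
Proof.
  intros n. unfold sl, gp. simpl.
  replace (/4) with (/2 * /2) by field. rewrite Rpow_mult_distr. field.
Qed.

Lemma sl_pos : forall n, 0 < sl n.
Proof. intros n. unfold sl. apply Rmult_lt_0_compat. apply pow_lt; lra. pose proof (pow_lt (/2) n ltac:(lra)). lra. Qed.
Lemma gp_pos : forall n, 0 < gp n.
Proof. intros n. unfold gp. apply pow_lt; lra. Qed.
Lemma wl_pos : forall n, 0 < wl n.
Proof. intros n. unfold wl. apply pow_lt; lra. Qed.
Lemma gp_wl : forall n, gp n = wl (S n).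
Proof. reflexivity. Qed.
Lemma wl_S : forall n, wl (S n) <= wl n.
Proof. intros n. unfold wl. simpl. pose proof (pow_lt (/4) n ltac:(lra)). lra. Qed.

Lemma L_even : forall n m, L (S n) (2*m) = L n m.
Proof. intros n m. cbn [L]. rewrite Nat.div2_double, Nat.odd_even. ring. Qed.
Lemma L_odd : forall n m, L (S n) (2*m+1) = L n m + sl (S n) + gp n.
Proof.
  intros n m. cbn [L]. rewrite Nat.odd_odd. rewrite Nat.add_1_r, Nat.div2_succ_double. ring.
Qed.

Lemma nat_split : forall j, exists m, j = (2*m)%nat \/ j = (2*m+1)%nat.
Proof.
  intros j. exists (Nat.div2 j). pose proof (Nat.div2_odd j).
  destruct (Nat.odd j); simpl in H; lia.
Qed.

Lemma L_step : forall n j, L n j + sl n + wl n <= L n (S j).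
Proof.
  induction n; intros j.
  - cbn [L]. unfold sl, wl. rewrite S_INR. simpl. lra.
  - destruct (nat_split j) as [m [Hm|Hm]]; subst j.
    + replace (S (2*m)) with (2*m+1)%nat by lia. rewrite L_odd, L_even. rewrite <- gp_wl. lra.
    + replace (S (2*m+1)) with (2*(S m))%nat by lia. rewrite L_odd, L_even.
      specialize (IHn m). rewrite (sl_split n) in IHn. pose proof (wl_S n). rewrite <- gp_wl in *. lra.
Qed.

Lemma L_mono_lt : forall n j j', (j < j')%nat -> L n j + sl n + wl n <= L n j'.
Proof.
  intros n j j' H. induction H.
  - apply L_step.
  - pose proof (L_step n m). pose proof (sl_pos n). pose proof (wl_pos n). lra.
Qed.

Lemma L_mono : forall n j j', (j <= j')%nat -> L n j <= L n j'.
Proof.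
  intros n j j' H. destruct (Nat.eq_dec j j'). subst; lra.
  pose proof (L_mono_lt n j j' ltac:(lia)). pose proof (sl_pos n). pose proof (wl_pos n). lra.
Qed.

Lemma L_nest_l : forall n j, L n (Nat.div2 j) <= L (S n) j.
Proof.
  intros n j. destruct (nat_split j) as [m [Hm|Hm]]; subst j.
  - rewrite Nat.div2_double, L_even. lra.
  - replace (Nat.div2 (2*m+1)) with m by (rewrite Nat.add_1_r, Nat.div2_succ_double; auto). rewrite L_odd.
    pose proof (sl_pos (S n)); pose proof (gp_pos n). lra.
Qed.
Lemma L_nest_r : forall n j, L (S n) j + sl (S n) <= L n (Nat.div2 j) + sl n.
Proof.
  intros n j. rewrite (sl_split n). pose proof (sl_pos (S n)); pose proof (gp_pos n).
  destruct (nat_split j) as [m [Hm|Hm]]; subst j.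
  - rewrite Nat.div2_double, L_even. lra.
  - replace (Nat.div2 (2*m+1)) with m by (rewrite Nat.add_1_r, Nat.div2_succ_double; auto). rewrite L_odd. lra.
Qed.

Lemma L_range : forall n j, (j < 2^n)%nat -> 0 <= L n j /\ L n j + sl n <= 1.
Proof.
  induction n; intros j Hj.
  - simpl in Hj. assert (j = 0%nat) by lia. subst. simpl. unfold sl. simpl. lra.
  - assert (Nat.div2 j < 2^n)%nat.
    { destruct (nat_split j) as [m [Hm|Hm]]; subst j; simpl in Hj.
      rewrite Nat.div2_double. lia. rewrite Nat.add_1_r, Nat.div2_succ_double. lia. }
    destruct (IHn _ H). pose proof (L_nest_l n j). pose proof (L_nest_r n j). lra.
Qed.

Definition inI (n j:nat) (x:R) : Prop := L n j <= x <= L n j + sl n.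
Definition Cset (x:R) : Prop := forall n, exists j, (j < 2^n)%nat /\ inI n j x.

Lemma inI_unique : forall n j j' x, inI n j x -> inI n j' x -> j = j'.
Proof.
  intros n j j' x [H1 H2] [H3 H4].
  destruct (lt_eq_lt_dec j j') as [[H|H]|H]; auto.
  - pose proof (L_mono_lt n j j' H). pose proof (wl_pos n). lra.
  - pose proof (L_mono_lt n j' j H). pose proof (wl_pos n). lra.
Qed.

Lemma inI_parent : forall n j x, inI (S n) j x -> inI n (Nat.div2 j) x.
Proof.
  intros n j x [H1 H2]. pose proof (L_nest_l n j). pose proof (L_nest_r n j). split; lra.
Qed.

Lemma pow_half_le1 : forall n, 0 < (/2)^n <= 1.
Proof.
  induction n. simpl; lra. simpl. nra.
Qed.

Lemma sl_le : forall n, sl n <= (/2)^n.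
Proof.
  intros n. unfold sl. pose proof (pow_half_le1 n). simpl.
  assert ((/2) * (/2)^n * (1 + (/2)^n) <= (/2) * (/2)^n * 2).
  { apply Rmult_le_compat_l. nra. lra. } lra.
Qed.

Lemma INR_le_pow2 : forall n, INR n + 1 <= 2^n.
Proof.
  induction n. simpl; lra. rewrite S_INR. simpl. pose proof (pos_INR n). lra.
Qed.
Lemma INR_lt_pow2 : forall n, INR n < 2^n.
Proof. intros n. pose proof (INR_le_pow2 n). lra. Qed.

Lemma small_zero : forall z, (forall n, Rabs z <= (/2)^n) -> z = 0.
Proof.
  intros z H. destruct (Req_dec z 0); auto. exfalso.
  assert (Hz : 0 < Rabs z) by (apply Rabs_pos_lt; auto).
  destruct (INR_archimed (Rabs z) 1 Hz) as [n Hn].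
  specialize (H n). pose proof (INR_lt_pow2 n). pose proof (pow_lt 2 n ltac:(lra)).
  rewrite <- Rinv_pow in H by lra.
  apply Rmult_le_compat_r with (r := 2^n) in H; [|lra].
  rewrite Rinv_l in H by lra.
  assert (INR n * Rabs z < 2^n * Rabs z) by (apply Rmult_lt_compat_r; auto). lra.
Qed.

Lemma Cset_eq : forall x x', Cset x -> Cset x' ->
  (forall n j j', inI n j x -> inI n j' x' -> j = j') -> x = x'.
Proof.
  intros x x' Hx Hx' H. assert (x - x' = 0); [|lra]. apply small_zero. intros n.
  destruct (Hx n) as [j [_ Hj]]. destruct (Hx' n) as [j' [_ Hj']].
  pose proof (H n j j' Hj Hj'). subst j'. destruct Hj, Hj'.
  pose proof (sl_le n). apply Rabs_le. lra.
Qed.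

Definition Mj (i:nat) : R := proj1_sig (constructive_indefinite_description _ (DS_bound i)).
Lemma Mj_spec : forall i, 0 <= Mj i /\ forall t, Rabs (DS i t) <= Mj i.
Proof. intros i. unfold Mj. destruct (constructive_indefinite_description _ _). simpl. auto. Qed.

Definition ctr (n k:nat) : R := L n k + sl n.
Definition Dphi (n i:nat) (x:R) : R :=
  sum_f_R0 (fun k => (/ wl n)^i * DS i ((x - ctr n k) / wl n)) (pred (2^n)).

Lemma Dphi_tower : forall n i x, derivable_pt_lim (Dphi n i) x (Dphi n (S i) x).
Proof.
  intros n i x. unfold Dphi.
  apply (sum_deriv (fun k y => (/ wl n)^i * DS i ((y - ctr n k) / wl n))
                   (fun k y => (/ wl n)^(S i) * DS (S i) ((y - ctr n k) / wl n))).
  intros k. pose proof (wl_pos n).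
  replace ((/ wl n)^(S i) * DS (S i) ((x - ctr n k) / wl n))
    with ((/ wl n)^i * (DS (S i) ((x - ctr n k) / wl n) * / wl n)) by (simpl; ring).
  apply (derivable_pt_lim_scal (fun y => DS i ((y - ctr n k) / wl n))).
  apply (derivable_pt_lim_comp (fun y => (y - ctr n k) / wl n) (DS i)).
  - apply is_derive_Reals. auto_derive. auto. field. lra.
  - apply DS_tower.
Qed.

Lemma pow2_pos : forall n, (1 <= 2^n)%nat.
Proof. induction n; simpl; lia. Qed.

Lemma sum_const_bound : forall (f:nat -> R) N c, (forall k, Rabs (f k) <= c) -> Rabs (sum_f_R0 f N) <= INR (S N) * c.
Proof.
  intros f N c H. induction N; simpl sum_f_R0.
  - simpl. rewrite Rmult_1_l. auto.
  - eapply Rle_trans. apply Rabs_triang. rewrite S_INR. specialize (H (S N)). lra.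
Qed.

Lemma inv_wl : forall n, / wl n = 4^n.
Proof. intros n. unfold wl. rewrite Rinv_pow by lra. rewrite Rinv_inv. auto. Qed.

Lemma Dphi_bound : forall n i x, Rabs (Dphi n i x) <= 2^n * (4^n)^i * Mj i.
Proof.
  intros n i x. unfold Dphi.
  eapply Rle_trans. apply (sum_const_bound _ _ ((4^n)^i * Mj i)).
  - intros k. rewrite Rabs_mult. rewrite inv_wl. rewrite Rabs_right.
    apply Rmult_le_compat_l. apply pow_le. apply pow_le. lra. apply Mj_spec.
    apply Rle_ge. apply pow_le. apply pow_le. lra.
  - pose proof (pow2_pos n).
    replace (S (Init.Nat.pred (2 ^ n))) with (2^n)%nat by lia. rewrite pow_INR.
    replace (INR 2) with 2 by (simpl; ring). right; ring.
Qed.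

Lemma sum_indicator : forall j N, sum_f_R0 (fun k => if lt_dec k j then 1 else 0) N = INR (Nat.min j (S N)).
Proof.
  intros j N. induction N; simpl sum_f_R0.
  - destruct (lt_dec 0 j). replace (Nat.min j 1) with 1%nat by lia. auto.
    replace (Nat.min j 1) with 0%nat by lia. auto.
  - rewrite IHN. destruct (lt_dec (S N) j).
    + replace (Nat.min j (S N)) with (S N) by lia. replace (Nat.min j (S (S N))) with (S (S N)) by lia.
      rewrite (S_INR (S N)). auto.
    + replace (Nat.min j (S (S N))) with (Nat.min j (S N)) by lia. ring.
Qed.

Lemma Dphi_val : forall n j x, (j < 2^n)%nat -> inI n j x -> Dphi n 0 x = INR j.
Proof.
  intros n j x Hj [H1 H2]. unfold Dphi.
  rewrite (sum_eq _ (fun k => if lt_dec k j then 1 else 0)).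
  - rewrite sum_indicator. pose proof (pow2_pos n). f_equal. lia.
  - intros k _. rewrite pow_O, Rmult_1_l, DS_0. pose proof (wl_pos n).
    destruct (lt_dec k j).
    + apply Ssm_1. apply Rmult_le_reg_r with (wl n); auto. unfold Rdiv. rewrite Rmult_assoc, Rinv_l by lra.
      rewrite Rmult_1_l, Rmult_1_r. unfold ctr. pose proof (L_mono_lt n k j l). lra.
    + apply Ssm_0. unfold Rdiv. apply Rmult_le_0_r. unfold ctr.
      assert (j <= k)%nat by lia. pose proof (L_mono n j k H0). lra.
      left; apply Rinv_0_lt_compat; auto.
Qed.

Definition epsw (m:nat) : R := (/2)^(2*m*m).

Lemma key_ineq : forall n i, (/2)^(n*n) * 2^n * (4^n)^i <= 2^((i+1)*(i+1)) * (/2)^n.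
Proof.
  intros n i.
  rewrite <- !Rinv_pow by lra.
  replace (4^n) with (2^(2*n)) by (rewrite pow_mult; f_equal; simpl; ring).
  rewrite <- pow_mult.
  assert (P1 : 0 < 2^(n*n)) by (apply pow_lt; lra).
  assert (P2 : 0 < 2^n) by (apply pow_lt; lra).
  apply Rmult_le_reg_r with (2^(n*n) * 2^n). nra.
  replace (/ 2 ^ (n * n) * 2 ^ n * 2 ^ (2 * n * i) * (2 ^ (n * n) * 2 ^ n)) with (2^(n + n + 2*n*i))
    by (rewrite !pow_add; field; lra).
  replace (2 ^ ((i + 1) * (i + 1)) * / 2 ^ n * (2 ^ (n * n) * 2 ^ n)) with (2^((i+1)*(i+1) + n*n))
    by (rewrite !pow_add; field; lra).
  apply Rle_pow. lra.
  pose proof (Z.square_nonneg (Z.of_nat n - Z.of_nat i - 1)). nia.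
Qed.

Lemma weight_summable : forall (e : nat -> R) i M, 0 <= M -> (forall n, 0 <= e n <= (/2)^(n*n)) ->
  ex_series (fun n => e n * 2^n * (4^n)^i * M).
Proof.
  intros e i M HM He.
  apply (@ex_series_le R_AbsRing R_CompleteNormedModule _ (fun n => (M * 2^((i+1)*(i+1))) * (/2)^n)).
  - intros n. change (norm (e n * 2 ^ n * (4 ^ n) ^ i * M)) with (Rabs (e n * 2 ^ n * (4 ^ n) ^ i * M)).
    assert (0 <= e n * 2 ^ n * (4 ^ n) ^ i * M).
    { apply Rmult_le_pos; auto. apply Rmult_le_pos. apply Rmult_le_pos. apply He. apply pow_le; lra.
      apply pow_le; apply pow_le; lra. }
    rewrite Rabs_right by lra.
    pose proof (key_ineq n i).
    assert (e n * 2 ^ n * (4 ^ n) ^ i <= (/ 2) ^ (n * n) * 2 ^ n * (4 ^ n) ^ i).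
    { apply Rmult_le_compat_r. apply pow_le; apply pow_le; lra.
      apply Rmult_le_compat_r. apply pow_le; lra. apply He. }
    replace (M * 2 ^ ((i + 1) * (i + 1)) * (/ 2) ^ n) with (M * (2 ^ ((i + 1) * (i + 1)) * (/ 2) ^ n)) by ring.
    rewrite (Rmult_comm _ M). apply Rmult_le_compat_l; auto. lra.
  - apply (@ex_series_scal_l R_AbsRing R_NormedModule). apply ex_series_geom. rewrite Rabs_right; lra.
Qed.

Definition eF (n:nat) : R := epsw (2*n).
Definition eG (n:nat) : R := epsw (2*n+1).

Lemma epsw_bound : forall m n, (n <= m)%nat -> 0 <= epsw m <= (/2)^(n*n).
Proof.
  intros m n H. unfold epsw. split. apply pow_le; lra.
  rewrite <- !Rinv_pow by lra. apply Rinv_le_contravar. apply pow_lt; lra.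
  apply Rle_pow. lra. nia.
Qed.

Definition TF (n i:nat) (x:R) : R := eF n * Dphi n i x.
Definition TG (n i:nat) (x:R) : R := eG n * Dphi n i x.
Definition BF (n i:nat) : R := eF n * 2^n * (4^n)^i * Mj i.
Definition BG (n i:nat) : R := eG n * 2^n * (4^n)^i * Mj i.

Lemma TF_tower : forall n j x, derivable_pt_lim (TF n j) x (TF n (S j) x).
Proof. intros. apply derivable_pt_lim_scal. apply Dphi_tower. Qed.
Lemma TG_tower : forall n j x, derivable_pt_lim (TG n j) x (TG n (S j) x).
Proof. intros. apply derivable_pt_lim_scal. apply Dphi_tower. Qed.
Lemma TF_bound : forall n j x, Rabs (TF n j x) <= BF n j.
Proof.
  intros. unfold TF, BF. rewrite Rabs_mult. pose proof (epsw_bound (2*n) n ltac:(lia)).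
  rewrite Rabs_right by (unfold eF; lra). rewrite !Rmult_assoc. apply Rmult_le_compat_l. unfold eF; lra.
  rewrite <- Rmult_assoc. apply Dphi_bound.
Qed.
Lemma TG_bound : forall n j x, Rabs (TG n j x) <= BG n j.
Proof.
  intros. unfold TG, BG. rewrite Rabs_mult. pose proof (epsw_bound (2*n+1) n ltac:(lia)).
  rewrite Rabs_right by (unfold eG; lra). rewrite !Rmult_assoc. apply Rmult_le_compat_l. unfold eG; lra.
  rewrite <- Rmult_assoc. apply Dphi_bound.
Qed.
Lemma BF_sum : forall j, ex_series (fun n => BF n j).
Proof. intros j. apply weight_summable. apply Mj_spec. intros n; apply epsw_bound; lia. Qed.
Lemma BG_sum : forall j, ex_series (fun n => BG n j).
Proof. intros j. apply weight_summable. apply Mj_spec. intros n; apply epsw_bound; lia. Qed.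

Definition DF := SumT TF.
Definition DG := SumT TG.

Lemma DF_tower : forall j x, derivable_pt_lim (DF j) x (DF (S j) x).
Proof. apply (SumT_tower TF BF). apply TF_tower. apply TF_bound. apply BF_sum. Qed.
Lemma DG_tower : forall j x, derivable_pt_lim (DG j) x (DG (S j) x).
Proof. apply (SumT_tower TG BG). apply TG_tower. apply TG_bound. apply BG_sum. Qed.
Lemma DF_cv : forall x, infinite_sum (fun n => TF n 0 x) (DF 0 x).
Proof. intros x. apply (SumT_cv TF BF TF_bound BF_sum). Qed.
Lemma DG_cv : forall x, infinite_sum (fun n => TG n 0 x) (DG 0 x).
Proof. intros x. apply (SumT_cv TG BG TG_bound BG_sum). Qed.

Lemma dist2_fst : forall p q, Rabs (fst p - fst q) <= dist2 p q.
Proof.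
  intros p q. unfold dist2. rewrite <- sqrt_Rsqr_abs. apply sqrt_le_1_alt.
  unfold Rsqr. simpl. pose proof (Rle_0_sqr (snd p - snd q)). unfold Rsqr in H. nra.
Qed.
Lemma dist2_snd : forall p q, Rabs (snd p - snd q) <= dist2 p q.
Proof.
  intros p q. unfold dist2. rewrite <- sqrt_Rsqr_abs. apply sqrt_le_1_alt.
  unfold Rsqr. simpl. pose proof (Rle_0_sqr (fst p - fst q)). unfold Rsqr in H. nra.
Qed.

Lemma cont_eps : forall f x, continuity_pt f x -> forall eps, 0 < eps ->
  exists d, 0 < d /\ forall y, Rabs (y - x) < d -> Rabs (f y - f x) < eps.
Proof.
  intros f x H eps He.
  unfold continuity_pt, continue_in, limit1_in, limit_in in H.
  destruct (H eps He) as [d [Hd Hd']]. exists d. split; auto.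
  intros y Hy. destruct (Req_dec y x). subst. rewrite Rminus_diag, Rabs_R0; auto.
  apply (Hd' y). split. split. constructor. auto. simpl; unfold R_dist; auto.
Qed.

Lemma cont2_sep : forall (f g : R -> R) a b, (forall x, continuity_pt f x) -> (forall x, continuity_pt g x) ->
  continuous2 (fun p => a * f (fst p) + b * g (snd p)).
Proof.
  intros f g a b Hf Hg p eps He.
  set (e' := eps / (2 * (Rabs a + Rabs b + 1))).
  assert (He' : 0 < e').
  { unfold e'. apply Rdiv_lt_0_compat; auto. pose proof (Rabs_pos a); pose proof (Rabs_pos b); lra. }
  destruct (cont_eps f (fst p) (Hf _) e' He') as [d1 [Hd1 H1]].
  destruct (cont_eps g (snd p) (Hg _) e' He') as [d2 [Hd2 H2]].
  exists (Rmin d1 d2). split. apply Rmin_pos; auto.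
  intros q Hq.
  assert (Q1 : Rabs (f (fst q) - f (fst p)) < e').
  { apply H1. rewrite Rabs_minus_sym. pose proof (dist2_fst p q). pose proof (Rmin_l d1 d2). lra. }
  assert (Q2 : Rabs (g (snd q) - g (snd p)) < e').
  { apply H2. rewrite Rabs_minus_sym. pose proof (dist2_snd p q). pose proof (Rmin_r d1 d2). lra. }
  replace (a * f (fst q) + b * g (snd q) - (a * f (fst p) + b * g (snd p)))
    with (a * (f (fst q) - f (fst p)) + b * (g (snd q) - g (snd p))) by ring.
  eapply Rle_lt_trans. apply Rabs_triang. rewrite !Rabs_mult.
  assert (Rabs a * Rabs (f (fst q) - f (fst p)) <= Rabs a * e').
  { apply Rmult_le_compat_l. apply Rabs_pos. lra. }
  assert (Rabs b * Rabs (g (snd q) - g (snd p)) <= Rabs b * e').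
  { apply Rmult_le_compat_l. apply Rabs_pos. lra. }
  assert ((Rabs a + Rabs b) * e' < eps).
  { unfold e'. pose proof (Rabs_pos a); pose proof (Rabs_pos b).
    apply Rmult_lt_reg_r with (2 * (Rabs a + Rabs b + 1)). lra.
    field_simplify. nra. lra. }
  lra.
Qed.

Lemma Ck2_sep : forall (DF DG : nat -> R -> R),
  (forall j x, derivable_pt_lim (DF j) x (DF (S j) x)) ->
  (forall j x, derivable_pt_lim (DG j) x (DG (S j) x)) ->
  forall k i l a b, Ck2 k (fun p => a * DF i (fst p) + b * DG l (snd p)).
Proof.
  intros DF DG HF HG.
  assert (CF : forall j x, continuity_pt (DF j) x).
  { intros j x. apply derivable_continuous_pt. exists (DF (S j) x). apply HF. }
  assert (CG : forall j x, continuity_pt (DG j) x).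
  { intros j x. apply derivable_continuous_pt. exists (DG (S j) x). apply HG. }
  induction k; intros i l a b.
  - simpl. apply cont2_sep; auto.
  - simpl. split. apply cont2_sep; auto.
    exists (fun p => a * DF (S i) (fst p) + 0 * DG l (snd p)).
    exists (fun p => 0 * DF i (fst p) + b * DG (S l) (snd p)).
    split; [|split; [|split]].
    + intros x y. simpl. replace (0 * DG l y) with 0 by ring.
      apply (derivable_pt_lim_plus (fun t => a * DF i t) (fun t => b * DG l y)).
      apply derivable_pt_lim_scal. apply HF.
      apply derivable_pt_lim_const.
    + intros x y. simpl. replace (0 * DF i x) with 0 by ring.
      apply (derivable_pt_lim_plus (fun t => a * DF i x) (fun t => b * DG l t)).
      apply derivable_pt_lim_const.
      apply derivable_pt_lim_scal. apply HG.
    + apply IHk.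
    + apply IHk.
Qed.

Lemma hpow_mono : forall E F, (F <= E)%nat -> (/2)^E <= (/2)^F.
Proof.
  intros E F H. rewrite <- !Rinv_pow by lra. apply Rinv_le_contravar. apply pow_lt; lra.
  apply Rle_pow. lra. auto.
Qed.

Lemma two_h : forall k, 2 * 2^k * (/2)^(S k) = 1.
Proof.
  intros k. assert (H: 2^k * (/2)^k = 1) by (rewrite <- Rpow_mult_distr; replace (2 * /2) with 1 by field; apply pow1).
  simpl. replace (2 * 2 ^ k * (/ 2 * (/ 2) ^ k)) with ((2 * /2) * (2^k * (/2)^k)) by ring. rewrite H. field.
Qed.

Definition beta (k:nat) : R := (eF k + eG k) * 2^k.

Lemma eG_le_eF : forall k, eG k <= eF k.
Proof. intros k. unfold eG, eF, epsw. apply hpow_mono. nia. Qed.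
Lemma eF_pos : forall k, 0 < eF k.
Proof. intros; unfold eF, epsw; apply pow_lt; lra. Qed.
Lemma eG_pos : forall k, 0 < eG k.
Proof. intros; unfold eG, epsw; apply pow_lt; lra. Qed.

Lemma beta_bound : forall n N, beta (S (n + N)) <= eG n * (/2)^(N+2).
Proof.
  intros n N. set (k := S (n + N)). unfold beta.
  assert (beta_le : (eF k + eG k) * 2^k <= 2 * eF k * 2^k).
  { pose proof (eG_le_eF k). pose proof (pow_lt 2 k ltac:(lra)). nra. }
  eapply Rle_trans; [apply beta_le|].
  unfold eF, eG, epsw.
  set (E := (2 * (2 * k) * (2 * k) - S k)%nat).
  replace (2 * (2 * k) * (2 * k))%nat with (S k + E)%nat by (unfold E, k; nia).
  rewrite (pow_add (/2) (S k) E). rewrite <- (pow_add (/2) (2 * (2 * n + 1) * (2 * n + 1)) (N + 2)).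
  apply Rle_trans with ((/2)^E). right. rewrite <- (Rmult_1_l ((/2)^E)) at 2. rewrite <- (two_h k). ring.
  apply hpow_mono. unfold E, k. nia.
Qed.

Lemma beta_tail_partial : forall n N, sum_f_R0 beta (n + N) - sum_f_R0 beta n <= eG n / 2 * (1 - (/2)^N).
Proof.
  intros n N. induction N.
  - rewrite Nat.add_0_r. simpl. lra.
  - rewrite Nat.add_succ_r. simpl sum_f_R0 at 1. pose proof (beta_bound n N).
    replace (N + 2)%nat with (S (S N)) in H by lia. simpl in H. simpl pow. pose proof (eG_pos n). nra.
Qed.

Lemma beta_sum : ex_series beta.
Proof.
  unfold beta.
  apply (ex_series_ext (fun k => (eF k * 2^k * (4^k)^0 * 1) + (eG k * 2^k * (4^k)^0 * 1))).
  intros k; simpl; ring.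
  apply (@ex_series_plus R_AbsRing R_NormedModule).
  apply weight_summable. lra. intros n; apply epsw_bound; lia.
  apply weight_summable. lra. intros n; apply epsw_bound; lia.
Qed.

Lemma beta_cv : Un_cv (sum_f_R0 beta) (Series beta).
Proof. apply is_series_Reals. apply Series_correct. apply beta_sum. Qed.

Lemma beta_tail : forall n, Series beta - sum_f_R0 beta n <= eG n / 2.
Proof.
  intros n.
  assert (H : Un_cv (fun N => sum_f_R0 beta (N + n) - sum_f_R0 beta n) (Series beta - sum_f_R0 beta n)).
  { apply CV_minus. apply is_lim_seq_Reals. apply (is_lim_seq_incr_n (sum_f_R0 beta) n (Series beta)).
    apply is_lim_seq_Reals. apply beta_cv. apply is_lim_seq_Reals. apply is_lim_seq_const. }
  eapply Rle_cv_lim; [ | exact H | ].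
  - intros N. cbv beta. rewrite Nat.add_comm. pose proof (beta_tail_partial n N). pose proof (pow_lt (/2) N ltac:(lra)).
    pose proof (eG_pos n). instantiate (1 := fun _ => eG n / 2). cbv beta. nra.
  - apply is_lim_seq_Reals. apply is_lim_seq_const.
Qed.

Definition cseq (a b : nat -> nat) (n:nat) : R := eF n * INR (a n) + eG n * INR (b n).

Lemma sum_prefix_zero : forall (d : nat -> R) n, (forall k, (k < n)%nat -> d k = 0) -> sum_f_R0 d n = d n.
Proof.
  intros d n H. destruct n. reflexivity. simpl. rewrite (sum_eq_R0 d n). ring.
  intros k Hk. apply H. lia.
Qed.

Lemma INR_diff_ge1 : forall p q : nat, p <> q -> 1 <= Rabs (INR p - INR q).
Proof.
  intros p q H. destruct (lt_dec p q).
  - assert (INR p + 1 <= INR q). { rewrite <- S_INR. apply le_INR. lia. }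
    rewrite Rabs_left1 by lra. lra.
  - assert (INR q + 1 <= INR p). { rewrite <- S_INR. apply le_INR. lia. }
    rewrite Rabs_right by lra. lra.
Qed.

Lemma INR_diff_lt : forall p q n : nat, (p < 2^n)%nat -> (q < 2^n)%nat -> Rabs (INR p - INR q) <= 2^n - 1.
Proof.
  intros p q n Hp Hq. assert (INR p + 1 <= 2^n). { rewrite <- S_INR. replace 2 with (INR 2) by (simpl; ring). rewrite <- pow_INR. apply le_INR. lia. }
  assert (INR q + 1 <= 2^n). { rewrite <- S_INR. replace 2 with (INR 2) by (simpl; ring). rewrite <- pow_INR. apply le_INR. lia. }
  pose proof (pos_INR p). pose proof (pos_INR q). apply Rabs_le. lra.
Qed.

Lemma R1_ineq : forall n, eG n * 2^n <= eF n - eG n.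
Proof.
  intros n.
  assert (eG n * 2^(S n) <= eF n).
  { unfold eG, eF, epsw.
    replace (2 * (2 * n + 1) * (2 * n + 1))%nat with (S n + (8*n*n + 7*n + 1))%nat by nia.
    rewrite pow_add. replace ((/ 2) ^ S n * (/ 2) ^ (8 * n * n + 7 * n + 1) * 2 ^ S n) with
      ((2^(S n) * (/2)^(S n)) * (/ 2) ^ (8 * n * n + 7 * n + 1)) by ring.
    rewrite <- Rpow_mult_distr. replace (2 * /2) with 1 by field. rewrite pow1, Rmult_1_l.
    apply hpow_mono. nia. }
  fold (epsw (2 * n + 1)) (epsw (2*n)) in H. fold (eG n) (eF n) in H. simpl pow in H.
  fold (epsw (2 * n + 1)) (epsw (2*n)). fold (eG n) (eF n).
  pose proof (eG_pos n).
  assert (1 <= 2^n). { pose proof (INR_le_pow2 n). pose proof (pos_INR n). lra. } nra.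
Qed.

Lemma decode : forall a b a' b' S, (forall n, (a n < 2^n)%nat /\ (b n < 2^n)%nat /\ (a' n < 2^n)%nat /\ (b' n < 2^n)%nat) ->
  infinite_sum (cseq a b) S -> infinite_sum (cseq a' b') S -> forall n, a n = a' n /\ b n = b' n.
Proof.
  intros a b a' b' S Hr H1 H2.
  set (d := fun n => cseq a b n - cseq a' b' n).
  assert (Hd : Un_cv (sum_f_R0 d) 0).
  { replace 0 with (S - S) by ring. unfold d.
    apply (Un_cv_ext (fun N => sum_f_R0 (cseq a b) N - sum_f_R0 (cseq a' b') N)).
    intros N; rewrite minus_sum; auto. apply CV_minus; auto. }
  assert (Hb : forall k, Rabs (d k) <= beta k).
  { intros k. unfold d, cseq, beta. destruct (Hr k) as [ha [hb [ha' hb']]].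
    replace (eF k * INR (a k) + eG k * INR (b k) - (eF k * INR (a' k) + eG k * INR (b' k)))
      with (eF k * (INR (a k) - INR (a' k)) + eG k * (INR (b k) - INR (b' k))) by ring.
    eapply Rle_trans. apply Rabs_triang. rewrite !Rabs_mult.
    pose proof (eF_pos k); pose proof (eG_pos k).
    rewrite (Rabs_right (eF k)), (Rabs_right (eG k)) by lra.
    pose proof (INR_diff_lt _ _ _ ha ha'). pose proof (INR_diff_lt _ _ _ hb hb').
    nra. }
  intros n. induction n as [n IH] using (well_founded_induction lt_wf).
  assert (Hz : forall k, (k < n)%nat -> d k = 0).
  { intros k Hk. destruct (IH k Hk) as [E1 E2]. unfold d, cseq. rewrite E1, E2. ring. }
  pose proof (tail_bound d beta 0 (Series beta) Hd beta_cv Hb n) as T.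
  rewrite sum_prefix_zero in T by auto. rewrite Rminus_0_l, Rabs_Ropp in T.
  pose proof (beta_tail n).
  assert (Hdn : Rabs (d n) <= eG n / 2) by lra. clear T H.
  unfold d, cseq in Hdn.
  replace (eF n * INR (a n) + eG n * INR (b n) - (eF n * INR (a' n) + eG n * INR (b' n)))
      with (eF n * (INR (a n) - INR (a' n)) + eG n * (INR (b n) - INR (b' n))) in Hdn by ring.
  destruct (Hr n) as [ha [hb [ha' hb']]].
  pose proof (eF_pos n); pose proof (eG_pos n).
  assert (Ea : a n = a' n).
  { destruct (Nat.eq_dec (a n) (a' n)) as [E|E]; auto. exfalso.
    pose proof (INR_diff_ge1 _ _ E). pose proof (INR_diff_lt _ _ _ hb hb').
    pose proof (Rabs_triang_inv (eF n * (INR (a n) - INR (a' n))) (- (eG n * (INR (b n) - INR (b' n))))) as TI.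
    replace (eF n * (INR (a n) - INR (a' n)) - - (eG n * (INR (b n) - INR (b' n)))) with
      (eF n * (INR (a n) - INR (a' n)) + eG n * (INR (b n) - INR (b' n))) in TI by ring.
    rewrite Rabs_Ropp, !Rabs_mult, (Rabs_right (eF n)), (Rabs_right (eG n)) in TI by lra.
    pose proof (R1_ineq n). nra. }
  split; auto.
  destruct (Nat.eq_dec (b n) (b' n)) as [E|E]; auto. exfalso.
  rewrite Ea, Rminus_diag, Rmult_0_r, Rplus_0_l, Rabs_mult, (Rabs_right (eG n)) in Hdn by lra.
  pose proof (INR_diff_ge1 _ _ E). nra.
Qed.

Definition Aset (p:pt) : Prop := Cset (fst p) /\ Cset (snd p).
Definition kappa (p:pt) : R := 1 * DF 0 (fst p) + 1 * DG 0 (snd p).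

Lemma kappa_smooth : smooth2 kappa.
Proof. intros k. unfold kappa. apply Ck2_sep. apply DF_tower. apply DG_tower. Qed.

Lemma infinite_sum_ext : forall u v l, (forall n, u n = v n) -> infinite_sum u l -> infinite_sum v l.
Proof.
  intros u v l H Hu. apply is_series_Reals. apply is_series_Reals in Hu.
  apply (is_series_ext u); auto.
Qed.

Lemma idx_seq : forall x, Cset x -> exists a : nat -> nat, forall n, (a n < 2^n)%nat /\ inI n (a n) x.
Proof.
  intros x Hx. exists (fun n => proj1_sig (constructive_indefinite_description _ (Hx n))).
  intros n. destruct (constructive_indefinite_description _ (Hx n)). simpl. auto.
Qed.

Lemma kappa_series : forall p a b, (forall n, (a n < 2^n)%nat /\ inI n (a n) (fst p)) ->
  (forall n, (b n < 2^n)%nat /\ inI n (b n) (snd p)) -> infinite_sum (cseq a b) (kappa p).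
Proof.
  intros p a b Ha Hb. unfold kappa. rewrite !Rmult_1_l.
  assert (H1 := DF_cv (fst p)). assert (H2 := DG_cv (snd p)).
  apply infinite_sum_ext with (fun n => TF n 0 (fst p) + TG n 0 (snd p)).
  { intros n. unfold TF, TG, cseq. destruct (Ha n), (Hb n). rewrite (Dphi_val n (a n)), (Dphi_val n (b n)); auto. }
  unfold infinite_sum in *. apply (Un_cv_ext (fun N => sum_f_R0 (fun n => TF n 0 (fst p)) N + sum_f_R0 (fun n => TG n 0 (snd p)) N)).
  intros N; rewrite plus_sum; auto.
  apply CV_plus; auto.
Qed.

Lemma kappa_inj : injective_on kappa Aset.
Proof.
  intros p q [Hp1 Hp2] [Hq1 Hq2] E.
  destruct (idx_seq _ Hp1) as [a Ha]. destruct (idx_seq _ Hp2) as [b Hb].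
  destruct (idx_seq _ Hq1) as [a' Ha']. destruct (idx_seq _ Hq2) as [b' Hb'].
  pose proof (kappa_series p a b Ha Hb). pose proof (kappa_series q a' b' Ha' Hb').
  rewrite E in H.
  assert (D := decode a b a' b' (kappa q)).
  assert (D' : forall n, a n = a' n /\ b n = b' n).
  { apply D; auto. intros n. destruct (Ha n), (Hb n), (Ha' n), (Hb' n). auto. }
  assert (fst p = fst q).
  { apply Cset_eq; auto. intros n j j' I1 I2.
    rewrite (inI_unique n j (a n) _ I1 (proj2 (Ha n))), (inI_unique n j' (a' n) _ I2 (proj2 (Ha' n))).
    apply D'. }
  assert (snd p = snd q).
  { apply Cset_eq; auto. intros n j j' I1 I2.
    rewrite (inI_unique n j (b n) _ I1 (proj2 (Hb n))), (inI_unique n j' (b' n) _ I2 (proj2 (Hb' n))).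
    apply D'. }
  destruct p, q; simpl in *; subst; auto.
Qed.

Lemma cv_le_eventually : forall u l c n, Un_cv u l -> (forall m, (n <= m)%nat -> u m <= c) -> l <= c.
Proof.
  intros u l c n H Hm. destruct (Rle_lt_dec l c); auto. exfalso.
  destruct (H (l - c) ltac:(lra)) as [N HN]. specialize (HN (max N n) ltac:(lia)).
  specialize (Hm (max N n) ltac:(lia)). unfold R_dist in HN. apply Rabs_def2 in HN. lra.
Qed.

Lemma nested_point : forall j : nat -> nat, (forall n, Nat.div2 (j (S n)) = j n) ->
  exists x, forall n, inI n (j n) x.
Proof.
  intros j Hj.
  set (u := fun n => L n (j n)).
  assert (Hup : forall n m, (n <= m)%nat -> L m (j m) + sl m <= L n (j n) + sl n).
  { intros n m H. induction H. lra. pose proof (L_nest_r m (j (S m))). rewrite Hj in H0. lra. }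
  assert (Hg : Un_growing u).
  { intros n. unfold u. pose proof (L_nest_l n (j (S n))). rewrite Hj in H. auto. }
  assert (Hb : has_ub u).
  { exists (L 0 (j 0%nat) + sl 0). intros x [i Hi]. subst x. unfold u.
    pose proof (Hup 0%nat i ltac:(lia)). pose proof (sl_pos i). lra. }
  destruct (growing_cv u Hg Hb) as [x Hx].
  exists x. intros n. split.
  - apply (growing_ineq u x Hg Hx n).
  - apply (cv_le_eventually u x _ n Hx). intros m Hm. unfold u. pose proof (Hup n m Hm). pose proof (sl_pos m). lra.
Qed.

Lemma dist2_le_sum : forall p q, dist2 p q <= Rabs (fst p - fst q) + Rabs (snd p - snd q).
Proof.
  intros p q. unfold dist2.
  rewrite <- (sqrt_pow2 (Rabs (fst p - fst q) + Rabs (snd p - snd q))).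
  apply sqrt_le_1_alt.
  pose proof (Rabs_pos (fst p - fst q)); pose proof (Rabs_pos (snd p - snd q)).
  rewrite <- (pow2_abs (fst p - fst q)), <- (pow2_abs (snd p - snd q)). nra.
  pose proof (Rabs_pos (fst p - fst q)); pose proof (Rabs_pos (snd p - snd q)). lra.
Qed.

Lemma pow_half_small : forall eps, 0 < eps -> exists n, (/2)^n < eps.
Proof.
  intros eps He. destruct (INR_archimed eps 1 He) as [n Hn]. exists n.
  pose proof (INR_lt_pow2 n). pose proof (pow_lt 2 n ltac:(lra)).
  rewrite <- Rinv_pow by lra.
  apply Rmult_lt_reg_l with (2^n). auto. rewrite Rinv_r by lra.
  assert (INR n * eps < 2^n * eps) by (apply Rmult_lt_compat_r; auto). lra.
Qed.

Lemma Cset_idx0 : forall x, Cset x -> inI 0 0 x.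
Proof. intros x H. destruct (H 0%nat) as [j [Hj Hi]]. simpl in Hj. replace j with 0%nat in Hi by lia. auto. Qed.

Lemma Cset_child : forall n j x, Cset x -> inI n j x -> exists e, (e < 2)%nat /\ inI (S n) (2*j+e) x.
Proof.
  intros n j x Hx Hi. destruct (Hx (S n)) as [j' [_ Hj']].
  pose proof (inI_parent _ _ _ Hj'). pose proof (inI_unique _ _ _ _ Hi H). subst j.
  destruct (nat_split j') as [m [Hm|Hm]]; subst j'.
  - exists 0%nat. rewrite Nat.div2_double. rewrite Nat.add_0_r. auto.
  - exists 1%nat. replace (Nat.div2 (2*m+1)) with m by (rewrite Nat.add_1_r, Nat.div2_succ_double; auto). split; auto.
Qed.

Lemma Cset_idx_range : forall n j x, Cset x -> inI n j x -> (j < 2^n)%nat.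
Proof. intros n j x Hx Hi. destruct (Hx n) as [j' [Hj' Hi']]. rewrite (inI_unique _ _ _ _ Hi Hi'). auto. Qed.

Section Compact.
Variable I : Type.
Variable U : I -> pt -> Prop.
Hypothesis Uopen : forall i, open2 (U i).
Hypothesis Ucov : forall p, Aset p -> exists i, U i p.

Definition Pfin (n j k : nat) : Prop := exists l : list I, forall p, Aset p -> inI n j (fst p) -> inI n k (snd p) ->
  exists i, In i l /\ U i p.

Lemma Pfin_children : forall n j k, (forall e1 e2, (e1 < 2)%nat -> (e2 < 2)%nat -> Pfin (S n) (2*j+e1) (2*k+e2)) -> Pfin n j k.
Proof.
  intros n j k H.
  destruct (H 0%nat 0%nat ltac:(lia) ltac:(lia)) as [l1 H1].
  destruct (H 0%nat 1%nat ltac:(lia) ltac:(lia)) as [l2 H2].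
  destruct (H 1%nat 0%nat ltac:(lia) ltac:(lia)) as [l3 H3].
  destruct (H 1%nat 1%nat ltac:(lia) ltac:(lia)) as [l4 H4].
  exists (l1 ++ l2 ++ l3 ++ l4). intros p Hp Hx Hy.
  destruct (Cset_child _ _ _ (proj1 Hp) Hx) as [e1 [He1 Hx']].
  destruct (Cset_child _ _ _ (proj2 Hp) Hy) as [e2 [He2 Hy']].
  assert (e1 = 0 \/ e1 = 1)%nat as [E1|E1] by lia; assert (e2 = 0 \/ e2 = 1)%nat as [E2|E2] by lia; subst.
  - destruct (H1 p Hp Hx' Hy') as [i [Hi Ui]]. exists i. split; auto. apply in_or_app; auto.
  - destruct (H2 p Hp Hx' Hy') as [i [Hi Ui]]. exists i. split; auto. apply in_or_app; right; apply in_or_app; auto.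
  - destruct (H3 p Hp Hx' Hy') as [i [Hi Ui]]. exists i. split; auto. apply in_or_app; right; apply in_or_app; right; apply in_or_app; auto.
  - destruct (H4 p Hp Hx' Hy') as [i [Hi Ui]]. exists i. split; auto. apply in_or_app; right; apply in_or_app; right; apply in_or_app; auto.
Qed.

Lemma step_exists : forall n j k, exists jk : nat * nat, (~ Pfin n j k -> ~ Pfin (S n) (fst jk) (snd jk)) /\
   Nat.div2 (fst jk) = j /\ Nat.div2 (snd jk) = k.
Proof.
  intros n j k. destruct (classic (Pfin n j k)) as [HP|HP].
  - exists (2*j, 2*k)%nat. cbn [fst snd]. rewrite !Nat.div2_double. repeat split; auto; intros Cc; contradiction.
  - assert (exists e1 e2, (e1 < 2)%nat /\ (e2 < 2)%nat /\ ~ Pfin (S n) (2*j+e1) (2*k+e2)).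
    { apply NNPP. intros C. apply HP. apply Pfin_children. intros e1 e2 h1 h2. apply NNPP. intros C'.
      apply C. exists e1, e2. auto. }
    destruct H as [e1 [e2 [h1 [h2 h3]]]]. exists (2*j+e1, 2*k+e2)%nat. cbn [fst snd].
    assert (D : forall m e, (e < 2)%nat -> Nat.div2 (2*m+e) = m).
    { intros m e he. assert (e = 0 \/ e = 1)%nat as [E|E] by lia; subst.
      rewrite Nat.add_0_r, Nat.div2_double; auto. rewrite Nat.add_1_r, Nat.div2_succ_double; auto. }
    split; auto.
Qed.

Definition stepf (n : nat) (jk : nat * nat) : nat * nat :=
  proj1_sig (constructive_indefinite_description _ (step_exists n (fst jk) (snd jk))).

Fixpoint path (n:nat) : nat * nat := match n with O => (0%nat, 0%nat) | S n' => stepf n' (path n') end.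

Lemma path_prop : forall n, Nat.div2 (fst (path (S n))) = fst (path n) /\ Nat.div2 (snd (path (S n))) = snd (path n) /\
   (~ Pfin n (fst (path n)) (snd (path n)) -> ~ Pfin (S n) (fst (path (S n))) (snd (path (S n)))).
Proof.
  intros n. simpl. unfold stepf. destruct (constructive_indefinite_description _ _) as [jk [H1 [H2 H3]]]. simpl. auto.
Qed.

Lemma compact_A : exists l : list I, forall p, Aset p -> exists i, In i l /\ U i p.
Proof.
  apply NNPP. intros C.
  assert (H0 : ~ Pfin 0 0 0).
  { intros [l Hl]. apply C. exists l. intros p Hp. apply Hl; auto; apply Cset_idx0; apply Hp. }
  assert (Hn : forall n, ~ Pfin n (fst (path n)) (snd (path n))).
  { induction n. auto. apply path_prop. auto. }
  destruct (nested_point (fun n => fst (path n))) as [x Hx]. { intros n; apply path_prop. }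
  destruct (nested_point (fun n => snd (path n))) as [y Hy]. { intros n; apply path_prop. }
  assert (Hin : forall n, exists p, Aset p /\ inI n (fst (path n)) (fst p) /\ inI n (snd (path n)) (snd p)).
  { intros n. apply NNPP. intros Cn. apply (Hn n). exists nil. intros p Hp H1 H2. exfalso. apply Cn. exists p. auto. }
  assert (HA : Aset (x, y)).
  { split; simpl; intros n; destruct (Hin n) as [p [Hp [H1 H2]]].
    - exists (fst (path n)). split; auto. apply (Cset_idx_range n _ (fst p)); auto. apply Hp.
    - exists (snd (path n)). split; auto. apply (Cset_idx_range n _ (snd p)); auto. apply Hp. }
  destruct (Ucov _ HA) as [i Hi].
  destruct (Uopen i _ Hi) as [eps [He Heps]].
  destruct (pow_half_small (eps/2) ltac:(lra)) as [n Hsn].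
  apply (Hn n). exists (i :: nil). intros p Hp H1 H2. exists i. split. left; auto.
  apply Heps. eapply Rle_lt_trans. apply dist2_le_sum. simpl.
  destruct (Hx n), (Hy n), H1, H2. pose proof (sl_le n).
  assert (Rabs (x - fst p) <= sl n) by (apply Rabs_le; lra).
  assert (Rabs (y - snd p) <= sl n) by (apply Rabs_le; lra). lra.
Qed.
End Compact.

Lemma Aset_compact : compact2 Aset.
Proof. intros I U Ho Hc. apply (compact_A I U Ho Hc). Qed.

Fixpoint fsum (f : nat -> R) (J : nat) : R := match J with O => 0 | S J' => fsum f J' + f J' end.

Lemma fsum_ext : forall f g J, (forall j, (j < J)%nat -> f j = g j) -> fsum f J = fsum g J.
Proof. intros f g J H. induction J; simpl; auto. rewrite IHJ, H; auto. Qed.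
Lemma fsum_le : forall f g J, (forall j, (j < J)%nat -> f j <= g j) -> fsum f J <= fsum g J.
Proof. intros f g J H. induction J; simpl. lra. pose proof (H J ltac:(lia)). assert (fsum f J <= fsum g J) by (apply IHJ; intros; apply H; lia). lra. Qed.
Lemma fsum_nonneg : forall f J, (forall j, (j < J)%nat -> 0 <= f j) -> 0 <= fsum f J.
Proof. intros f J H. induction J; simpl. lra. pose proof (H J ltac:(lia)). assert (0 <= fsum f J) by (apply IHJ; intros; apply H; lia). lra. Qed.
Lemma fsum_plus : forall f g J, fsum (fun j => f j + g j) J = fsum f J + fsum g J.
Proof. intros f g J. induction J; simpl. lra. rewrite IHJ. ring. Qed.
Lemma fsum_scal : forall c f J, fsum (fun j => c * f j) J = c * fsum f J.
Proof. intros c f J. induction J; simpl. ring. rewrite IHJ. ring. Qed.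
Lemma fsum_const : forall c J, fsum (fun _ => c) J = INR J * c.
Proof. intros c J. induction J; simpl fsum. simpl; ring. rewrite IHJ, S_INR. ring. Qed.
Lemma fsum_swap : forall (f : nat -> nat -> R) I J, fsum (fun i => fsum (fun j => f i j) J) I = fsum (fun j => fsum (fun i => f i j) I) J.
Proof.
  intros f I J. induction I; simpl.
  - induction J; simpl; auto. rewrite <- IHJ. ring.
  - rewrite IHI. rewrite <- fsum_plus. auto.
Qed.
Lemma fsum_mult : forall f g I J, fsum f I * fsum g J = fsum (fun i => fsum (fun j => f i * g j) J) I.
Proof.
  intros f g I J. induction I; simpl. ring. rewrite Rmult_plus_distr_r, IHI. f_equal.
  rewrite fsum_scal. auto.
Qed.
Lemma fsum_ge_one : forall f J j0, (j0 < J)%nat -> (forall j, (j < J)%nat -> 0 <= f j) -> 1 <= f j0 -> 1 <= fsum f J.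
Proof.
  intros f J j0 Hj H Hone. induction J. lia. simpl.
  destruct (Nat.eq_dec j0 J). subst. pose proof (fsum_nonneg f J ltac:(intros; apply H; lia)). simpl; lra.
  assert (1 <= fsum f J) by (apply IHJ; [lia| intros; apply H; lia]). pose proof (H J ltac:(lia)). lra.
Qed.
Lemma fsum_sum_f_R0 : forall f N, fsum f (S N) = sum_f_R0 f N.
Proof. intros f N. induction N. simpl. ring. simpl fsum. simpl sum_f_R0. rewrite <- IHN. simpl. auto. Qed.

Definition chi (n:nat) (a b : R) (j:nat) : R :=
  if Rle_dec a (L n j) then (if Rle_dec (L n j + sl n) b then 1 else 0) else 0.

Lemma chi_range : forall n a b j, 0 <= chi n a b j <= 1.
Proof. intros. unfold chi. destruct (Rle_dec _ _); [destruct (Rle_dec _ _)|]; lra. Qed.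

Lemma count1D_inv : forall n a b J, sl n * fsum (chi n a b) J <= Rmax 0 (Rmin b (L n J) - a).
Proof.
  intros n a b J. induction J; simpl fsum.
  - rewrite Rmult_0_r. apply Rmax_l.
  - unfold chi at 2. pose proof (L_step n J). pose proof (sl_pos n). pose proof (wl_pos n).
    destruct (Rle_dec a (L n J)) as [K1|K1]; [destruct (Rle_dec (L n J + sl n) b) as [K2|K2]|].
    + rewrite Rmin_right in IHJ by lra. rewrite Rmax_right in IHJ by lra.
      rewrite Rmult_plus_distr_l, Rmult_1_r.
      eapply Rle_trans; [|apply Rmax_r]. unfold Rmin. destruct (Rle_dec b (L n (S J))); lra.
    + rewrite Rmult_plus_distr_l, Rmult_0_r, Rplus_0_r. eapply Rle_trans. apply IHJ.
      apply Rle_max_compat_l. unfold Rmin. destruct (Rle_dec b (L n J)), (Rle_dec b (L n (S J))); lra.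
    + rewrite Rmult_plus_distr_l, Rmult_0_r, Rplus_0_r. eapply Rle_trans. apply IHJ.
      apply Rle_max_compat_l. unfold Rmin. destruct (Rle_dec b (L n J)), (Rle_dec b (L n (S J))); lra.
Qed.

Lemma count1D : forall n a b J, a <= b -> sl n * fsum (chi n a b) J <= b - a.
Proof.
  intros n a b J H. eapply Rle_trans. apply count1D_inv. unfold Rmax, Rmin.
  destruct (Rle_dec b (L n J)), (Rle_dec 0 _); lra.
Qed.

Lemma fsum_ind : forall K J, fsum (fun i => if lt_dec i K then 1 else 0) J = INR (Nat.min K J).
Proof.
  intros K J. induction J; simpl fsum. rewrite Nat.min_0_r. auto.
  rewrite IHJ. destruct (lt_dec J K).
  - replace (Nat.min K (S J)) with (S J) by lia. replace (Nat.min K J) with J by lia. rewrite S_INR. ring.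
  - replace (Nat.min K (S J)) with (Nat.min K J) by lia. ring.
Qed.

Lemma sl_2n : forall n, 2^n * sl n = (1 + (/2)^n) / 2.
Proof.
  intros n. unfold sl. simpl. rewrite <- Rmult_assoc.
  replace (2^n * (/2 * (/2)^n)) with (/2 * (2^n * (/2)^n)) by ring.
  rewrite <- Rpow_mult_distr. replace (2 * /2) with 1 by field. rewrite pow1. field.
Qed.

Lemma level_cover : forall n, rect_cover_sums Aset (((1 + (/2)^n) / 2)^2).
Proof.
  intros n. set (M := (2^n)%nat). assert (HM : M <> 0%nat) by (pose proof (pow2_pos n); unfold M; lia).
  set (K := (M * M)%nat).
  exists (fun i => if lt_dec i K then L n (i mod M) else 0),
         (fun i => if lt_dec i K then L n (i mod M) + sl n else 0),
         (fun i => if lt_dec i K then L n (i / M) else 0),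
         (fun i => if lt_dec i K then L n (i / M) + sl n else 0).
  pose proof (sl_pos n). split; [|split].
  - intros i. destruct (lt_dec i K); lra.
  - intros p [Hx Hy]. destruct (Hx n) as [j [Hj Ij]]. destruct (Hy n) as [k [Hk Ik]].
    exists (j + k * M)%nat.
    assert (Hi : (j + k * M < K)%nat) by (unfold K, M in *; nia).
    destruct (lt_dec (j + k * M) K); [|lia].
    rewrite Nat.Div0.mod_add, Nat.mod_small by auto. rewrite Nat.div_add, Nat.div_small by auto. simpl.
    unfold inI in *. lra.
  - apply (Un_cv_ext (fun N => sum_f_R0 (fun i => (if lt_dec i K then 1 else 0) * (sl n * sl n)) N)).
    { intros N. apply sum_eq. intros i _. destruct (lt_dec i K); ring. }
    intros eps He. exists K. intros N HN. unfold R_dist.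
    rewrite <- fsum_sum_f_R0.
    rewrite (fsum_ext _ (fun i => (sl n * sl n) * (if lt_dec i K then 1 else 0))) by (intros; ring).
    rewrite fsum_scal, fsum_ind. replace (Nat.min K (S N)) with K by lia.
    unfold K. rewrite mult_INR. unfold M. rewrite pow_INR. replace (INR 2) with 2 by (simpl; ring).
    rewrite <- sl_2n. replace (sl n * sl n * (2 ^ n * 2 ^ n) - (2 ^ n * sl n) ^ 2) with 0 by ring.
    rewrite Rabs_R0; auto.
Qed.

Lemma upper_glb : forall m', (forall x, rect_cover_sums Aset x -> m' <= x) -> m' <= 1/4.
Proof.
  intros m' H. destruct (Rle_lt_dec m' (1/4)); auto. exfalso.
  destruct (pow_half_small (m' - 1/4) ltac:(lra)) as [n Hn].
  pose proof (H _ (level_cover n)). pose proof (pow_half_le1 n). nra.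
Qed.

Lemma inI_anc : forall k m j x, inI (m + k) j x -> inI m (j / 2^k) x.
Proof.
  induction k; intros m j x H.
  - rewrite Nat.add_0_r in H. rewrite Nat.pow_0_r, Nat.div_1_r. auto.
  - rewrite Nat.add_succ_r in H. apply inI_parent in H. apply IHk in H.
    rewrite Nat.div2_div, Nat.Div0.div_div in H. simpl. replace (2 * 2^k)%nat with (2^k + (2^k + 0))%nat by lia. auto.
Qed.

Lemma L_desc : forall k n j, L (n + k) (j * 2^k) = L n j.
Proof.
  induction k; intros n j.
  - rewrite Nat.add_0_r, Nat.mul_1_r. auto.
  - rewrite Nat.add_succ_r. replace (j * 2^(S k))%nat with (2 * (j * 2^k))%nat by (simpl; lia).
    rewrite L_even. apply IHk.
Qed.

Lemma Lpt_in_C : forall n j, (j < 2^n)%nat -> Cset (L n j).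
Proof.
  intros n j Hj m. destruct (le_lt_dec m n) as [H|H].
  - exists (j / 2^(n - m))%nat. split.
    + apply Nat.Div0.div_lt_upper_bound. rewrite <- Nat.pow_add_r. replace (n - m + m)%nat with n by lia. auto.
    + apply inI_anc. replace (m + (n - m))%nat with n by lia. unfold inI. pose proof (sl_pos n). lra.
  - exists (j * 2^(m - n))%nat. split.
    + replace m with (n + (m - n))%nat at 2 by lia. rewrite Nat.pow_add_r.
      pose proof (pow2_pos (m - n)). nia.
    + replace m with (n + (m - n))%nat at 1 by lia. unfold inI. rewrite L_desc.
      pose proof (sl_pos (n + (m - n))). lra.
Qed.

Lemma geom_fsum : forall N, fsum (fun i => (/2)^(S i)) N = 1 - (/2)^N.
Proof. induction N. simpl; ring. cbn [fsum]. rewrite IHN. simpl. field. Qed.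

Section Lower.
Variables a b c d : nat -> R.
Variable s eps : R.
Hypothesis Hab : forall n, a n <= b n /\ c n <= d n.
Hypothesis Hcov : forall p, Aset p -> exists n, a n <= fst p <= b n /\ c n <= snd p <= d n.
Hypothesis Hsum : infinite_sum (fun n => (b n - a n) * (d n - c n)) s.
Hypothesis Heps : 0 < eps <= 1.

Definition Wd (i:nat) : R := b i - a i + (d i - c i) + 1.
Definition eta (i:nat) : R := eps * (/2)^(S i) / (4 * Wd i).
Definition a' i := a i - eta i.
Definition b' i := b i + eta i.
Definition c' i := c i - eta i.
Definition d' i := d i + eta i.

Lemma Wd_ge1 : forall i, 1 <= Wd i.
Proof. intros i. unfold Wd. destruct (Hab i). lra. Qed.
Lemma eta_pos : forall i, 0 < eta i.
Proof.
  intros i. unfold eta. pose proof (Wd_ge1 i). apply Rdiv_lt_0_compat. apply Rmult_lt_0_compat. lra.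
  apply pow_lt; lra. lra.
Qed.

Lemma area'_bound : forall i, (b' i - a' i) * (d' i - c' i) <= (b i - a i) * (d i - c i) + eps * (/2)^(S i).
Proof.
  intros i. unfold a', b', c', d'. pose proof (Wd_ge1 i). pose proof (eta_pos i). destruct (Hab i).
  assert (Hh : 0 < (/2)^(S i) <= 1/2). { pose proof (pow_half_le1 i). simpl. split; nra. }
  assert (E : eta i * (4 * Wd i) = eps * (/2)^(S i)). { unfold eta. field. lra. }
  assert (Hsm : eta i <= 1/8). { assert (eps * (/2)^(S i) <= 1/2) by nra. nra. }
  unfold Wd in *. nra.
Qed.

Definition Ix := { t : pt * nat | Aset (fst t) /\ a (snd t) <= fst (fst t) <= b (snd t) /\ c (snd t) <= snd (fst t) <= d (snd t) }.
Definition Ut (t : Ix) (q : pt) : Prop :=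
  Rabs (fst q - fst (fst (proj1_sig t))) < eta (snd (proj1_sig t)) / 2 /\
  Rabs (snd q - snd (fst (proj1_sig t))) < eta (snd (proj1_sig t)) / 2.

Lemma Ut_open : forall t, open2 (Ut t).
Proof.
  intros t q [H1 H2]. set (p := fst (proj1_sig t)) in *. set (e := eta (snd (proj1_sig t)) / 2) in *.
  exists (Rmin (e - Rabs (fst q - fst p)) (e - Rabs (snd q - snd p))). split.
  apply Rmin_pos; lra.
  intros r Hr. unfold Ut. fold p. fold e. pose proof (dist2_fst q r). pose proof (dist2_snd q r).
  pose proof (Rmin_l (e - Rabs (fst q - fst p)) (e - Rabs (snd q - snd p))).
  pose proof (Rmin_r (e - Rabs (fst q - fst p)) (e - Rabs (snd q - snd p))).
  split.
  - replace (fst r - fst p) with ((fst r - fst q) + (fst q - fst p)) by ring.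
    eapply Rle_lt_trans. apply Rabs_triang. rewrite Rabs_minus_sym. lra.
  - replace (snd r - snd p) with ((snd r - snd q) + (snd q - snd p)) by ring.
    eapply Rle_lt_trans. apply Rabs_triang. rewrite Rabs_minus_sym. lra.
Qed.

Lemma Ut_cov : forall p, Aset p -> exists t, Ut t p.
Proof.
  intros p Hp. destruct (Hcov p Hp) as [n [H1 H2]].
  exists (exist _ (p, n) (conj Hp (conj H1 H2))). unfold Ut; simpl.
  pose proof (eta_pos n). split; unfold Rminus; rewrite Rplus_opp_r, Rabs_R0; lra.
Qed.

Definition idx (t:Ix) : nat := snd (proj1_sig t).
Definition deltal (l : list Ix) : R := fold_right (fun t acc => Rmin (eta (idx t) / 2) acc) 1 l.
Definition Nl (l : list Ix) : nat := fold_right (fun t acc => Nat.max (idx t) acc) 0%nat l.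

Lemma deltal_pos : forall l, 0 < deltal l.
Proof. induction l; simpl. lra. apply Rmin_pos; auto. pose proof (eta_pos (idx a0)). lra. Qed.
Lemma deltal_le : forall l t, In t l -> deltal l <= eta (idx t) / 2.
Proof.
  induction l; intros t H; simpl in H. contradiction. simpl. destruct H.
  subst. apply Rmin_l. eapply Rle_trans. apply Rmin_r. auto.
Qed.
Lemma Nl_ge : forall l t, In t l -> (idx t <= Nl l)%nat.
Proof. induction l; intros t H; simpl in H. contradiction. simpl. destruct H. subst; lia. pose proof (IHl t H); lia. Qed.

Lemma lower_eps : 1/4 <= s + eps.
Proof.
  destruct (Aset_compact Ix Ut Ut_open Ut_cov) as [l Hl].
  set (N := Nl l). set (del := deltal l).
  destruct (pow_half_small del (deltal_pos l)) as [n Hn].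
  pose proof (sl_le n). pose proof (sl_pos n).
  set (M := (2^n)%nat).
  set (chiX := fun i j => chi n (a' i) (b' i) j).
  set (chiY := fun i k => chi n (c' i) (d' i) k).
  assert (Key : forall j k, (j < M)%nat -> (k < M)%nat -> exists i, (i < S N)%nat /\ chiX i j = 1 /\ chiY i k = 1).
  { intros j k Hj Hk.
    assert (Hq : Aset (L n j, L n k)) by (split; apply Lpt_in_C; auto).
    destruct (Hl _ Hq) as [t [Ht [U1 U2]]].
    destruct t as [[p i] [Hp [Hx Hy]]]. simpl in *.
    pose proof (deltal_le l _ Ht). pose proof (Nl_ge l _ Ht). unfold idx in *; simpl in *.
    exists i. split. unfold N; lia.
    apply Rabs_def2 in U1. apply Rabs_def2 in U2. pose proof (eta_pos i). fold del in H1.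
    unfold chiX, chiY, chi, a', b', c', d'. split.
    - destruct (Rle_dec _ _); [destruct (Rle_dec _ _)|]; auto; exfalso; lra.
    - destruct (Rle_dec _ _); [destruct (Rle_dec _ _)|]; auto; exfalso; lra. }
  assert (Cnt : INR M * INR M * (sl n * sl n) <= fsum (fun i => (b' i - a' i) * (d' i - c' i)) (S N)).
  { apply Rle_trans with (fsum (fun i => fsum (fun j => fsum (fun k => (sl n * sl n) * (chiX i j * chiY i k)) M) M) (S N)).
    - rewrite fsum_swap.
      replace (INR M * INR M * (sl n * sl n)) with (INR M * (INR M * (sl n * sl n))) by ring.
      rewrite <- (fsum_const (INR M * (sl n * sl n)) M).
      apply fsum_le. intros j Hj. cbv beta.
      rewrite fsum_swap.
      rewrite <- (fsum_const (sl n * sl n) M). apply fsum_le. intros k Hk.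
      rewrite fsum_scal. rewrite <- (Rmult_1_r (sl n * sl n)) at 1. apply Rmult_le_compat_l. nra.
      destruct (Key j k Hj Hk) as [i0 [Hi0 [E1 E2]]].
      apply (fsum_ge_one _ _ i0 Hi0).
      + intros i _. pose proof (chi_range n (a' i) (b' i) j). pose proof (chi_range n (c' i) (d' i) k).
        unfold chiX, chiY. nra.
      + rewrite E1, E2. lra.
    - apply fsum_le. intros i _.
      assert (Eq : fsum (fun j => fsum (fun k => sl n * sl n * (chiX i j * chiY i k)) M) M = (sl n * fsum (chiX i) M) * (sl n * fsum (chiY i) M)).
      { rewrite <- (fsum_scal (sl n) (chiX i)), <- (fsum_scal (sl n) (chiY i)). rewrite fsum_mult. apply fsum_ext; intros j _. apply fsum_ext; intros k _. ring. }
      rewrite Eq.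
      destruct (Hab i). pose proof (eta_pos i).
      pose proof (count1D n (a' i) (b' i) M ltac:(unfold a', b'; lra)).
      pose proof (count1D n (c' i) (d' i) M ltac:(unfold c', d'; lra)).
      assert (0 <= sl n * fsum (chiX i) M).
      { apply Rmult_le_pos. lra. apply fsum_nonneg. intros; apply chi_range. }
      assert (0 <= sl n * fsum (chiY i) M).
      { apply Rmult_le_pos. lra. apply fsum_nonneg. intros; apply chi_range. }
      unfold chiX, chiY in *. apply Rmult_le_compat; auto. }
  assert (Up : fsum (fun i => (b' i - a' i) * (d' i - c' i)) (S N) <= s + eps).
  { eapply Rle_trans. apply fsum_le. intros i _. apply area'_bound.
    rewrite fsum_plus, fsum_scal, geom_fsum.
    rewrite fsum_sum_f_R0.
    assert (sum_f_R0 (fun i => (b i - a i) * (d i - c i)) N <= s).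
    { apply sum_incr; auto. intros i; destruct (Hab i). apply Rmult_le_pos; lra. }
    pose proof (pow_half_le1 (S N)). nra. }
  assert (Val : INR M * INR M * (sl n * sl n) = ((1 + (/2)^n)/2)^2).
  { unfold M. rewrite pow_INR. replace (INR 2) with 2 by (simpl; ring). rewrite <- sl_2n. ring. }
  pose proof (pow_half_le1 n). nra.
Qed.
End Lower.

Lemma lower_glb : forall s, rect_cover_sums Aset s -> 1/4 <= s.
Proof.
  intros s [a [b [c [d [H1 [H2 H3]]]]]].
  destruct (Rle_lt_dec (1/4) s); auto. exfalso.
  pose proof (lower_eps a b c d s (Rmin 1 ((1/4 - s)/2)) H1 H2 H3).
  assert (0 < Rmin 1 ((1/4 - s)/2) <= 1). { split. apply Rmin_pos; lra. apply Rmin_l. }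
  specialize (H H0). pose proof (Rmin_r 1 ((1/4 - s)/2)). lra.
Qed.


Theorem theorem3 :
  exists (A : pt -> Prop) (kappa : pt -> R),
    compact2 A /\ lambda2_is A (1/4) /\ smooth2 kappa /\ injective_on kappa A.
Proof.
  exists Aset, kappa. split; [apply Aset_compact|]. split.
  - split; [apply lower_glb | apply upper_glb].
  - split; [apply kappa_smooth | apply kappa_inj].
Qed.
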